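(* Consider the Rasch model and the random pairing construction described in the context, and let $d_i=\sum_{j\ne i}L_{ij}$ for $i\in[m]$. Suppose that $mp\ge2$, that $m\le n^{\alpha}$ for some constant $\alpha>0$, and that $np\ge C\kappa_2^2\log(n)$ for some sufficiently large constant $C>0$. Then with probability at least $1-2n^{-10}$, for all $i\in[m]$, \[ \frac{1}{24\kappa_2}np\le d_i\le\frac32np. \]
   Context: Rasch model. Let $n$ (users) and $m$ (items) be positive integers, $\boldsymbol\zeta^\star\in\mathbb R^n$, $\boldsymbol\theta^\star\in\mathbb R^m$ unknown parameters, and $p\in(0,1]$. Each pair $(t,i)\in[n]\times[m]$ is observed independently with probability $p$; let $\mathcal E_X$ be the observed pairs and $n_t=|\{i:(t,i)\in\mathcal E_X\}|$. For $(t,i)\in\mathcal E_X$ one observes independent binary $X_{ti}$ with $\mathbb P[X_{ti}=1]=e^{\theta_i^\star}/(e^{\zeta_t^\star}+e^{\theta_i^\star})$. Define $\kappa_2\ge1$ by $\log\kappa_2=\max_{t,i}|\zeta_t^\star-\theta_i^\star|$. Random pairing: for each user $t$, randomly (uniformly, independently across users and of the responses) split the $n_t$ items user $t$ responded to into $\lfloor n_t/2\rfloor$ disjoint unordered pairs. If $\{i,j\}$ is a selected pair for user $t$, set $L^t_{ij}=L^t_{ji}=\mathbb 1\{X_{ti}\ne X_{tj}\}$; otherwise $L^t_{ij}=0$. Let $L_{ij}=\sum_{t=1}^nL^t_{ij}$. *)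

(* Defs.v *)
From HB Require Import structures.
From mathcomp Require Import all_boot all_order all_algebra.
From mathcomp Require Import reals sequences exp.
Set Implicit Arguments. Unset Strict Implicit. Unset Printing Implicit Defensive.
Import Order.TTheory GRing.Theory Num.Theory.
Local Open Scope ring_scope.

Section Rasch.
Variables (R : realType) (n m : nat).

(* An outcome of the whole experiment:
   - mask  (t,i) : whether pair (t,i) is observed (prob. p, independently);
   - resp  (t,i) : response X_ti (sampled for all pairs; only observed ones are used);
   - pairs t     : the random pairing of user t, a set of unordered pairs of items. *)
Definition outcome := ({ffun 'I_n * 'I_m -> bool} * {ffun 'I_n * 'I_m -> bool}
                       * {ffun 'I_n -> {set {set 'I_m}}})%type.

Definition observed (mask : {ffun 'I_n * 'I_m -> bool}) (t : 'I_n) : {set 'I_m} :=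
  [set i | mask (t, i)].

Definition is_pairing (S : {set 'I_m}) (P : {set {set 'I_m}}) : bool :=
  [&& [forall e in P, (#|e| == 2)%N && (e \subset S)],
      trivIset P & #|P| == (#|S| %/ 2)%N].

Definition num_pairings (S : {set 'I_m}) : nat :=
  #|[set P : {set {set 'I_m}} | is_pairing S P]|.

Definition prob1 (zeta : 'I_n -> R) (theta : 'I_m -> R) t i : R :=
  expR (theta i) / (expR (zeta t) + expR (theta i)).

Definition weight (p : R) (zeta : 'I_n -> R) (theta : 'I_m -> R) (w : outcome) : R :=
  let: (mask, X, pairs) := w in
  (\prod_(ti : 'I_n * 'I_m) (if mask ti then p else 1 - p))
  * (\prod_(ti : 'I_n * 'I_m)
       (if X ti then prob1 zeta theta ti.1 ti.2 else 1 - prob1 zeta theta ti.1 ti.2))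
  * (\prod_(t : 'I_n)
       (if is_pairing (observed mask t) (pairs t)
        then (num_pairings (observed mask t))%:R^-1 else 0)).

Definition Prob (p : R) zeta theta (E : pred outcome) : R :=
  \sum_(w : outcome | E w) weight p zeta theta w.

Definition Lt (w : outcome) (t : 'I_n) (i j : 'I_m) : nat :=
  let: (mask, X, pairs) := w in
  (([set i; j] \in pairs t) && (X (t, i) != X (t, j)) && (i != j))%N.

Definition Lij (w : outcome) (i j : 'I_m) : nat := (\sum_(t < n) Lt w t i j)%N.

Definition deg (w : outcome) (i : 'I_m) : nat := (\sum_(j < m | j != i) Lij w i j)%N.

Definition kappa2 (zeta : 'I_n -> R) (theta : 'I_m -> R) : R :=
  expR (\big[Num.max/0]_(ti : 'I_n * 'I_m) `|zeta ti.1 - theta ti.2|).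

End Rasch.

(* Main.v *)
Require Import Defs.
From HB Require Import structures.
From mathcomp Require Import all_boot all_order all_algebra.
From mathcomp Require Import reals sequences exp.
From mathcomp Require Import zify ring lra.
Set Implicit Arguments. Unset Strict Implicit. Unset Printing Implicit Defensive.

Section Pairing.
Variable m : nat.
Implicit Types (S : {set 'I_m}) (P : {set {set 'I_m}}).

Lemma ex_pairing_k k : forall S, (#|S| <= k)%N -> exists P, is_pairing S P.
Proof.
elim: k => [|k IH] S hS.
  exists set0; apply/and3P; split.
  - by apply/forall_inP => e; rewrite in_set0.
  - by rewrite /trivIset /cover !big_set0 cards0.
  - by rewrite cards0; move: hS; rewrite leqn0 => /eqP ->.
have [hle|hgt] := leqP #|S| 1.
  exists set0; apply/and3P; split.
  - by apply/forall_inP => e; rewrite in_set0.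
  - by rewrite /trivIset /cover !big_set0 cards0.
  - by rewrite cards0; apply/eqP; move: hle; case: #|S| => [|[|]].
have [a aS] : exists a, a \in S.
  by apply/set0Pn; rewrite -card_gt0; lia.
have [b bS] : exists b, b \in S :\ a.
  by apply/set0Pn; rewrite -card_gt0; move: (cardsD1 a S); rewrite aS; lia.
move: bS; rewrite !inE => /andP [ba bS].
set S' := S :\: [set a; b].
have cS' : #|S'| = (#|S| - 2)%N.
  rewrite /S' cardsDS; last by apply/subsetP => x; rewrite !inE => /orP [] /eqP ->.
  by rewrite cards2 eq_sym ba.
have [P' /and3P [h1 h2 h3]] := IH S' ltac:(lia).
exists ([set a; b] |: P').
have dis : {in P', forall B : {set 'I_m}, [disjoint [set a; b] & B]}.
  move=> B BP; move/forall_inP: h1 => /(_ B BP) /andP [_ sB].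
  rewrite disjoint_subset; apply/subsetP => x xab; rewrite inE; apply/negP => xB.
  by have := subsetP sB x xB; rewrite /S' inE xab.
have n0 : set0 \notin P'.
  apply/negP => h0; move/forall_inP: h1 => /(_ _ h0) /andP [].
  by rewrite cards0.
have [tr nin] := trivIsetU1 dis h2 n0.
apply/and3P; split.
- apply/forall_inP => e; rewrite !inE => /orP [/eqP ->|eP].
    have ab : a != b by rewrite eq_sym. rewrite cards2 ab /=; apply/subsetP => x; rewrite !inE.
    by case/orP => /eqP ->.
  move/forall_inP: h1 => /(_ e eP) /andP [-> sE] /=.
  apply: subset_trans sE _; exact: subsetDl.
- exact: tr.
- rewrite cardsU1 nin; move/eqP: h3 => ->; rewrite cS'.
  apply/eqP; move: hgt; rewrite -addn1; lia.
Qed.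

Lemma ex_pairing S : exists P, is_pairing S P.
Proof. exact: (ex_pairing_k (leqnn _)). Qed.

Lemma num_pairings_gt0 S : (0 < num_pairings S)%N.
Proof.
rewrite /num_pairings card_gt0; apply/set0Pn.
by have [P hP] := ex_pairing S; exists P; rewrite inE.
Qed.


Lemma pairing_elem S P e : is_pairing S P -> e \in P -> (#|e| == 2)%N && (e \subset S).
Proof. by case/and3P => /forall_inP h _ _; apply: h. Qed.

Lemma cover_sub S P : is_pairing S P -> cover P \subset S.
Proof.
move=> hP; apply/subsetP => x /bigcupP [B BP xB].
by case/andP: (pairing_elem hP BP) => _ /subsetP; apply.
Qed.

Lemma uncov_le1 S P : is_pairing S P -> (#|S :\: cover P| <= 1)%N.
Proof.
move=> hP; have := hP; case/and3P => h1 /eqP htr /eqP hc.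
rewrite cardsDS ?cover_sub //.
have : (\sum_(B in P) #|B|)%N = (2 * #|P|)%N.
  rewrite (eq_bigr (fun _ => 2%N)); first by rewrite sum_nat_const mulnC.
  by move=> B BP; case/andP: (pairing_elem hP BP) => /eqP.
rewrite htr hc => ->; lia.
Qed.

Lemma uncov_uniq S P x y : is_pairing S P -> x \in S -> x \notin cover P ->
  y \in S -> y \notin cover P -> x = y.
Proof.
move=> hP xS xc yS yc; have /card_le1_eqP h := uncov_le1 hP.
by apply: h; rewrite inE ?xS ?yS ?xc ?yc.
Qed.

Definition cov (i : 'I_m) P := [exists j, (j != i) && ([set i; j] \in P)].

Lemma cov_cover S P i : is_pairing S P -> (i \in cover P) = cov i P.
Proof.
move=> hP; apply/idP/idP.
  case/bigcupP => B BP iB; case/andP: (pairing_elem hP BP) => /cards2P [x [y [xy hB]]] _.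
  move: iB; rewrite hB !inE => /orP [] /eqP ix; apply/existsP.
    by exists y; rewrite ix eq_sym xy -hB BP.
  by exists x; rewrite ix xy setUC -hB BP.
case/existsP => j /andP [_ hj]; apply/bigcupP; exists [set i; j] => //.
by rewrite !inE eqxx.
Qed.

Definition partner i P := [pick j | (j != i) && ([set i; j] \in P)].

Definition Phi S i P : {set {set 'I_m}} :=
  match partner i P, [pick x in S :\: cover P] with
  | Some a, Some b => [set a; b] |: (P :\ [set i; a])
  | _, _ => P
  end.

Lemma cov_count S i : i \in S -> (2 <= #|S|)%N ->
  (#|[set P | is_pairing S P && ~~ cov i P]| <= #|[set P | is_pairing S P && cov i P]|)%N.
Proof.
move=> iS hS.
set A := [set P | _ && cov i P].
apply: (leq_trans _ (leq_imset_card (Phi S i) A)).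
apply: subset_leq_card; apply/subsetP => P; rewrite inE => /andP [hP ncov].
have hP0 := hP; case/and3P: hP0 => h1 htr /eqP hc.
have ic : i \notin cover P by rewrite (cov_cover i hP).
have [e eP] : exists e, e \in P.
  by apply/set0Pn; rewrite -card_gt0 hc; lia.
have /andP [/cards2P [a [b [ab he]]] eS] := pairing_elem hP eP.
have aS : a \in S by apply: (subsetP eS); rewrite he !inE eqxx.
have bS : b \in S by apply: (subsetP eS); rewrite he !inE eqxx orbT.
have ae : a \in cover P by apply/bigcupP; exists e => //; rewrite he !inE eqxx.
have be : b \in cover P by apply/bigcupP; exists e => //; rewrite he !inE eqxx orbT.
have ai : a != i by apply/eqP => hai; move: ic; rewrite -hai ae.
have bi : b != i by apply/eqP => hbi; move: ic; rewrite -hbi be.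
have disj : forall B, B \in P -> B != e -> [disjoint e & B].
  by move=> B BP Be; move/trivIsetP: htr; apply => //; rewrite eq_sym.
have n0 : set0 \notin P :\ e.
  apply/negP; rewrite inE => /andP [_ h0]; have := pairing_elem hP h0.
  by rewrite cards0.
have dis2 : {in P :\ e, forall B : {set 'I_m}, [disjoint [set i; a] & B]}.
  move=> B; rewrite in_setD1 => /andP [Be BP]; rewrite disjoint_subset.
  apply/subsetP => x; rewrite !inE => /orP [] /eqP ->; apply/negP => hB.
    by move: ic; rewrite (_ : i \in cover P) //; apply/bigcupP; exists B.
  have := disj B BP Be; rewrite disjoint_subset => /subsetP /(_ a).
  by rewrite he !inE eqxx hB => /(_ isT).
have [tr2 nin] := trivIsetU1 dis2 (trivIsetS (subD1set P e) htr) n0.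
set P' := [set i; a] |: (P :\ e).
have hP' : is_pairing S P'.
  apply/and3P; split => //.
  - apply/forall_inP => B; rewrite !inE => /orP [/eqP ->|/andP [_ BP]].
      have ia : i != a by rewrite eq_sym. rewrite cards2 ia /=; apply/subsetP => x; rewrite !inE.
      by case/orP => /eqP ->.
    exact: pairing_elem hP BP.
  - by rewrite cardsU1 nin -hc [in X in _ == X](cardsD1 e P) eP.
have pa : partner i P' = Some a.
  rewrite /partner; case: pickP => [j /andP [ji hj]|].
    move: hj; rewrite !inE => /orP [/eqP hj|/andP [_ hj]].
      have : j \in [set i; a] by rewrite -hj !inE eqxx orbT.
      by rewrite !inE (negbTE ji) => /eqP ->.
    by move: ic; rewrite (cov_cover i hP) => /existsPn /(_ j); rewrite ji hj.
  by move=> /(_ a); rewrite ai !inE eqxx.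
have bc' : b \notin cover P'.
  apply/negP => /bigcupP [B]; rewrite !inE => /orP [/eqP ->|/andP [Be BP]].
    rewrite !inE => /orP [] /eqP hb; [by move: bi; rewrite hb eqxx|].
    by move: ab; rewrite hb eqxx.
  move=> bB; have := disj B BP Be; rewrite disjoint_subset => /subsetP /(_ b).
  by rewrite he !inE eqxx orbT bB => /(_ isT).
have pb : [pick x in S :\: cover P'] = Some b.
  case: pickP => [x|]; last by move=> /(_ b); rewrite !inE bS bc'.
  rewrite !inE => /andP [xc xS]; congr Some.
  have xi : x != i.
    apply/eqP => hx; move: xc; rewrite hx; apply/negP/negPn.
    by apply/bigcupP; exists [set i; a]; rewrite !inE eqxx.
  have xcP : x \in cover P.
    apply/negPn/negP => xn; move: xi; rewrite (uncov_uniq hP xS xn iS ic).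
    by rewrite eqxx.
  case/bigcupP: xcP => B BP xB.
  have Be : B = e.
    apply/eqP/negP => /negP Be; move: xc; apply/negP/negPn; apply/bigcupP.
    by exists B => //; rewrite !inE Be BP orbT.
  move: xB; rewrite Be he !inE => /orP [] /eqP // hx.
  by move: xc; rewrite hx => /negP; case; apply/bigcupP; exists [set i; a]; rewrite !inE eqxx ?orbT.
apply/imsetP; exists P'.
  by rewrite inE hP'; apply/existsP; exists a; rewrite ai !inE eqxx.
rewrite /Phi pa pb /P' setU1K // -he setD1K //.
Qed.

End Pairing.

Import Order.TTheory GRing.Theory Num.Theory.
Local Open Scope ring_scope.

Section Struct.
Variables (R : realType) (n m : nat).
Variables (p : R) (zeta : 'I_n -> R) (theta : 'I_m -> R).

Definition U := ({ffun 'I_m -> bool} * {ffun 'I_m -> bool} * {set {set 'I_m}})%type.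

Definition proj (w : outcome n m) (t : 'I_n) : U :=
  let: (mk, X, P) := w in ([ffun i => mk (t, i)], [ffun i => X (t, i)], P t).

Definition pf (mk : {ffun 'I_m -> bool}) (P : {set {set 'I_m}}) : R :=
  if is_pairing [set i | mk i] P then (num_pairings [set i | mk i])%:R^-1 else 0.



Definition wU (t : 'I_n) (u : U) : R :=
  let: (mk, X, P) := u in
  (\prod_i (if mk i then p else 1 - p))
  * (\prod_i (if X i then prob1 zeta theta t i else 1 - prob1 zeta theta t i))
  * pf mk P.

Lemma prod_pair (I J : finType) (f : I * J -> R) :
  \prod_(ij : I * J) f ij = \prod_i \prod_j f (i, j).
Proof. by rewrite pair_bigA; apply: eq_bigr => -[]. Qed.

Lemma weight_split w : weight p zeta theta w = \prod_t wU t (proj w t).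
Proof.
case: w => [[mk X] P]; rewrite /weight /wU /proj.
rewrite !big_split /= !prod_pair.
congr (_ * _ * _); apply: eq_bigr => t _.
  by apply: eq_bigr => i _; rewrite ffunE.
  by apply: eq_bigr => i _; rewrite ffunE.
rewrite /pf /observed; congr (if is_pairing _ _ then _ else _).
  by apply/setP => i; rewrite !inE ffunE.
by congr (_%:R^-1); congr num_pairings; apply/setP => i; rewrite !inE ffunE.
Qed.

Definition unproj (g : {ffun 'I_n -> U}) : outcome n m :=
  ([ffun ti => (g ti.1).1.1 ti.2], [ffun ti => (g ti.1).1.2 ti.2], [ffun t => (g t).2]).

Lemma sum_split (F : 'I_n -> U -> R) :
  \sum_(w : outcome n m) \prod_t F t (proj w t) = \prod_t \sum_u F t u.
Proof.
rewrite bigA_distr_bigA /=.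
rewrite (reindex (fun w : outcome n m => [ffun t => proj w t])) /=.
  by apply: eq_bigr => w _; apply: eq_bigr => t _; rewrite ffunE.
apply: onW_bij; exists unproj.
  case=> [[mk X] P]; rewrite /unproj /=; congr (_, _, _); apply/ffunP => x;
  rewrite !ffunE //=; by case: x.
move=> g; apply/ffunP => t; rewrite !ffunE /unproj /=.
case E: (g t) => [[a b] c]; congr (_, _, _); try apply/ffunP => i; rewrite !ffunE /= E //.
Qed.

Lemma sum_U (G : U -> R) :
  \sum_(u : U) G u = \sum_mk \sum_X \sum_P G (mk, X, P).
Proof.
have sp : forall (I J : finType) (f : I * J -> R), \sum_(ij : I * J) f ij = \sum_i \sum_j f (i, j).
  by move=> I J f; rewrite pair_bigA; apply: eq_bigr => -[].
by rewrite sp sp.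
Qed.

Lemma sum_ffun_bool (g : 'I_m -> bool -> R) :
  \sum_(f : {ffun 'I_m -> bool}) \prod_i g i (f i) = \prod_i (g i true + g i false).
Proof.
rewrite (eq_bigr (fun i => \sum_(b : bool) g i b)); last by move=> i _; rewrite big_bool.
by rewrite bigA_distr_bigA.
Qed.

End Struct.
Arguments pf {R m}.

Section PerUser.
Variables (R : realType) (m : nat) (p : R) (a : 'I_m -> R).

Definition wm (mk : {ffun 'I_m -> bool}) : R := \prod_i (if mk i then p else 1 - p).
Definition wx (X : {ffun 'I_m -> bool}) : R := \prod_i (if X i then a i else 1 - a i).

Lemma prod_delta (F : 'I_m -> R) i : \prod_k (if k == i then F k else 1) = F i.
Proof. by rewrite -big_mkcond /= big_pred1_eq. Qed.

Lemma prod_one (h : 'I_m -> R) i : (forall k, k != i -> h k = 1) -> \prod_k h k = h i.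
Proof. by move=> H; rewrite (bigD1 i) //= big1 ?mulr1 // => k /H. Qed.

Lemma prod_two (h : 'I_m -> R) i j : i != j ->
  (forall k, k != i -> k != j -> h k = 1) -> \prod_k h k = h i * h j.
Proof.
move=> ij H; rewrite (bigD1 i) //= (bigD1 j) /=; last by rewrite eq_sym ij.
rewrite big1 ?mulr1 ?mulrA // => k /andP [ki kj]; exact: H.
Qed.

Lemma sum_gen (c d : 'I_m -> bool -> R) :
  \sum_(f : {ffun 'I_m -> bool}) (\prod_k c k (f k)) * (\prod_k d k (f k))
  = \prod_k (c k true * d k true + c k false * d k false).
Proof.
apply: eq_trans (sum_ffun_bool (fun k b => c k b * d k b)).
by apply: eq_bigr => f _; rewrite -big_split.
Qed.

Lemma sum_wm : \sum_mk wm mk = 1.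
Proof.
apply: eq_trans (sum_ffun_bool (fun k b => if b then p else 1 - p)) _.
rewrite big1 // => k _; ring.
Qed.

Lemma sum_wx : \sum_X wx X = 1.
Proof.
apply: eq_trans (sum_ffun_bool (fun k b => if b then a k else 1 - a k)) _.
rewrite big1 // => k _; ring.
Qed.

Lemma sum_wm_i i : \sum_mk wm mk * (mk i)%:R = p.
Proof.
have := sum_gen (fun k b => if b then p else 1 - p) (fun k b => if k == i then ((b)%:R) else 1).
rewrite /= (prod_one (i := i)); last by move=> k /negbTE ->; ring.
rewrite eqxx mulr1 mulr0 addr0 => E; apply: eq_trans E; apply: eq_bigr => f _.
by rewrite prod_delta.
Qed.

Lemma sum_wm_single i :
  \sum_mk wm mk * \prod_k (if k == i then ((mk k)%:R) else ((~~ mk k)%:R))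
  = p * (1 - p) ^+ m.-1.
Proof.
have := sum_gen (fun k b => if b then p else 1 - p)
   (fun k b => if k == i then ((b)%:R) else ((~~ b)%:R)).
move=> ->; rewrite (bigD1 i) //= eqxx mulr1 mulr0 addr0; congr (_ * _).
rewrite (eq_bigr (fun _ => 1 - p)); last by move=> k /negbTE ->; rewrite /= mulr0 mulr1 add0r.
by rewrite prodr_const cardC1 card_ord.
Qed.

Lemma sum_wx_diff i j : i != j ->
  \sum_X wx X * ((X i != X j)%:R) = a i * (1 - a j) + (1 - a i) * a j.
Proof.
move=> ij.
have e : forall X : {ffun 'I_m -> bool}, ((X i != X j)%:R)
   = (\prod_k (if k == i then ((X k)%:R) else 1)) * (\prod_k (if k == j then ((~~ X k)%:R) else 1))
   + (\prod_k (if k == i then ((~~ X k)%:R) else 1)) * (\prod_k (if k == j then ((X k)%:R) else 1)) :> R.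
  by move=> X; rewrite !prod_delta; case: (X i); case: (X j); rewrite /= ?mulr0 ?mulr1 ?addr0 ?add0r ?mul0r ?mul1r.
under eq_bigr do rewrite e mulrDr.
rewrite big_split /=; congr (_ + _).
  have := sum_gen (fun k b => if b then a k else 1 - a k)
     (fun k b => (if k == i then ((b)%:R) else 1) * (if k == j then ((~~ b)%:R) else 1)).
  rewrite (prod_two ij); last by move=> k /negbTE -> /negbTE ->; ring.
  rewrite eqxx (negbTE ij) eq_sym (negbTE ij) eqxx /= => E.
  rewrite (_ : a i * (1 - a j) = (a i * (1 * 1) + (1 - a i) * (0 * 1)) * (a j * (1 * 0) + (1 - a j) * (1 * 1))); last by ring.
  apply: eq_trans E; by apply: eq_bigr => X _; rewrite big_split /= mulrA.
have := sum_gen (fun k b => if b then a k else 1 - a k)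
   (fun k b => (if k == i then ((~~ b)%:R) else 1) * (if k == j then ((b)%:R) else 1)).
rewrite (prod_two ij); last by move=> k /negbTE -> /negbTE ->; ring.
rewrite eqxx (negbTE ij) eq_sym (negbTE ij) eqxx /= => E.
rewrite (_ : (1 - a i) * a j = (a i * (0 * 1) + (1 - a i) * (1 * 1)) * (a j * (1 * 1) + (1 - a j) * (1 * 0))); last by ring.
apply: eq_trans E; by apply: eq_bigr => X _; rewrite big_split /= mulrA.
Qed.


Lemma sum_pf_cond (mk : {ffun 'I_m -> bool}) (Q : pred {set {set 'I_m}}) :
  \sum_P pf mk P * (Q P)%:R
  = #|[set P | is_pairing [set k | mk k] P && Q P]|%:R / (num_pairings [set k | mk k])%:R :> R.
Proof.
rewrite (eq_bigr (fun P => if is_pairing [set k | mk k] P && Q P then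
    (num_pairings [set k | mk k])%:R^-1 else 0 : R)); last first.
  by move=> P _; rewrite /pf; case: (is_pairing _ _); case: (Q P); rewrite /= ?mulr1 ?mulr0 ?mul0r.
rewrite -big_mkcond /= sumr_const cardsE.
by rewrite -[LHS]mulr_natr mulrC.
Qed.

Lemma sum_pf (mk : {ffun 'I_m -> bool}) : \sum_P pf mk P = 1 :> R.
Proof.
rewrite (eq_bigr (fun P => pf mk P * (xpredT P)%:R)); last by move=> P _; rewrite mulr1.
rewrite sum_pf_cond (_ : #|_| = num_pairings [set k | mk k]); last first.
  by apply: eq_card => P; rewrite !inE andbT.
by rewrite divff // pnatr_eq0 -lt0n num_pairings_gt0.
Qed.

Lemma sum_pf_cov (mk : {ffun 'I_m -> bool}) i : mk i -> (2 <= #|[set k | mk k]|)%N ->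
  1 / 2 <= \sum_P pf mk P * (cov i P)%:R :> R.
Proof.
move=> mki hS; rewrite sum_pf_cond.
set S := [set k | mk k].
have iS : i \in S by rewrite inE.
have hc := cov_count iS hS.
have hN : num_pairings S = (#|[set P | is_pairing S P && cov i P]| + #|[set P | is_pairing S P && ~~ cov i P]|)%N.
  have e1 : [set P | is_pairing S P] :&: [set P | cov i P] = [set P | is_pairing S P && cov i P] by apply/setP => P; rewrite !inE.
  have e2 : [set P | is_pairing S P] :\: [set P | cov i P] = [set P | is_pairing S P && ~~ cov i P] by apply/setP => P; rewrite !inE andbC.
  by rewrite /num_pairings -(cardsID [set P | cov i P]) e1 e2.
have Npos : (0 < num_pairings S)%N by exact: num_pairings_gt0.
rewrite ler_pdivlMr ?ltr0n //.
have : (num_pairings S <= 2 * #|[set P | is_pairing S P && cov i P]|)%N by lia.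
rewrite -(ler_nat R) natrM => h; lra.
Qed.

Hypotheses (p0 : 0 <= p) (p1 : p <= 1) (a0 : forall i, 0 <= a i) (a1 : forall i, a i <= 1).

Lemma wm_ge0 mk : 0 <= wm mk.
Proof. by apply: prodr_ge0 => i _; case: (mk i) => /=; rewrite ?subr_ge0. Qed.

Lemma wx_ge0 X : 0 <= wx X.
Proof. by apply: prodr_ge0 => i _; case: (X i) => /=; rewrite ?subr_ge0. Qed.

Lemma pf_ge0 (mk : {ffun 'I_m -> bool}) P : 0 <= pf mk P :> R.
Proof. by rewrite /pf; case: (is_pairing _ _) => //; rewrite invr_ge0 ler0n. Qed.

Definition EE (G : {ffun 'I_m -> bool} -> {ffun 'I_m -> bool} -> {set {set 'I_m}} -> R) :=
  \sum_mk \sum_X \sum_P wm mk * wx X * pf mk P * G mk X P.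

Lemma inner mk c : \sum_X \sum_P wm mk * wx X * pf mk P * c = wm mk * c.
Proof.
transitivity (wm mk * c * \sum_X (wx X * \sum_P pf mk P)).
  rewrite mulr_sumr; apply: eq_bigr => X _; rewrite !mulr_sumr; apply: eq_bigr => P _.
  ring.
rewrite (eq_bigr (fun X => wx X)); first by rewrite sum_wx mulr1.
by move=> X _; rewrite sum_pf mulr1.
Qed.

Lemma EE1 : EE (fun _ _ _ => 1) = 1.
Proof.
rewrite /EE (eq_bigr (fun mk => wm mk)); first exact: sum_wm.
by move=> mk _; rewrite inner mulr1.
Qed.

Definition DpF i (mk X : {ffun 'I_m -> bool}) (P : {set {set 'I_m}}) : bool :=
  [exists j, (j != i) && ([set i; j] \in P) && (X i != X j)].

Lemma EE_Dp_ge0 i : 0 <= EE (fun mk X P => (DpF i mk X P)%:R).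
Proof.
apply: sumr_ge0 => mk _; apply: sumr_ge0 => X _; apply: sumr_ge0 => P _.
by rewrite !mulr_ge0 ?wm_ge0 ?wx_ge0 ?pf_ge0 ?ler0n.
Qed.

Lemma EE_Dp_le i : EE (fun mk X P => (DpF i mk X P)%:R) <= p.
Proof.
apply: (@le_trans _ _ (\sum_mk \sum_X \sum_P wm mk * wx X * pf mk P * (mk i)%:R)).
  apply: ler_sum => mk _; apply: ler_sum => X _; apply: ler_sum => P _.
  rewrite /pf; case hP: (is_pairing _ _); last by rewrite !mulr0 !mul0r.
  apply: ler_wpM2l; first by rewrite !mulr_ge0 ?wm_ge0 ?wx_ge0 // invr_ge0 ler0n.
  rewrite ler_nat; case hD: (DpF i mk X P) => //=.
  case/existsP: hD => j /andP [/andP [_ hj] _].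
  have := pairing_elem hP hj => /andP [_ /subsetP /(_ i)].
  by rewrite !inE eqxx => /(_ isT) ->.
by rewrite (eq_bigr (fun mk => wm mk * (mk i)%:R)) ?sum_wm_i // => mk _; rewrite inner.
Qed.


Lemma sumX_Dp (delta : R) i (mk : {ffun 'I_m -> bool}) P :
  (forall j, i != j -> delta <= a i * (1 - a j) + (1 - a i) * a j) -> 0 <= delta ->
  delta * (cov i P)%:R <= \sum_X wx X * (DpF i mk X P)%:R.
Proof.
move=> hd d0; case hc: (cov i P); last first.
  by rewrite mulr0; apply: sumr_ge0 => X _; rewrite mulr_ge0 ?wx_ge0 ?ler0n.
case/existsP: hc => j /andP [ji hj]; rewrite mulr1.
have ij : i != j by rewrite eq_sym.
apply: (le_trans (hd j ij)); rewrite -sum_wx_diff //.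
apply: ler_sum => X _; apply: ler_wpM2l; first exact: wx_ge0.
rewrite ler_nat; case hX: (X i != X j) => //=.
have -> // : DpF i mk X P by apply/existsP; exists j; rewrite ji hj hX.
Qed.

Lemma cond_ind (mk : {ffun 'I_m -> bool}) i :
  (mk i)%:R - \prod_k (if k == i then (mk k)%:R else (~~ mk k)%:R)
  <= (mk i && (2 <= #|[set k | mk k]|)%N)%:R :> R.
Proof.
have Pge0 : 0 <= \prod_k (if k == i then (mk k)%:R else (~~ mk k)%:R) :> R.
  by apply: prodr_ge0 => k _; case: (_ == _); rewrite ler0n.
case hi: (mk i) => /=; last by rewrite sub0r oppr_le0.
case h2: (2 <= _)%N; first by rewrite lerBlDr lerDl.
rewrite big1 ?subrr // => k _; case: eqP => [->|/eqP ki]; first by rewrite hi.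
case hk: (mk k) => //; exfalso.
have : (2 <= #|[set k | mk k]|)%N.
  rewrite (cardsD1 i) inE hi (cardsD1 k) !inE ki hk /=.
  by [].
by rewrite h2.
Qed.

Lemma EE_Dp_lower (delta : R) i :
  (forall j, i != j -> delta <= a i * (1 - a j) + (1 - a i) * a j) -> 0 <= delta ->
  delta / 2 * (p - p * (1 - p) ^+ m.-1) <= EE (fun mk X P => (DpF i mk X P)%:R).
Proof.
move=> hd d0.
apply: (@le_trans _ _ (\sum_mk wm mk * (delta / 2 * ((mk i)%:R
    - \prod_k (if k == i then (mk k)%:R else (~~ mk k)%:R))))).
  rewrite (eq_bigr (fun mk => delta / 2 * (wm mk * (mk i)%:R) - delta / 2 *
     (wm mk * \prod_k (if k == i then (mk k)%:R else (~~ mk k)%:R)))); last first.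
    by move=> mk _; ring.
  by rewrite sumrB -!mulr_sumr sum_wm_i sum_wm_single mulrBr.
apply: ler_sum => mk _.
apply: (@le_trans _ _ (wm mk * (delta / 2 * (mk i && (2 <= #|[set k | mk k]|)%N)%:R))).
  apply: ler_wpM2l; first exact: wm_ge0.
  by apply: ler_wpM2l; [rewrite divr_ge0 | exact: cond_ind].
have -> : \sum_X \sum_P wm mk * wx X * pf mk P * (DpF i mk X P)%:R
   = wm mk * \sum_P pf mk P * \sum_X wx X * (DpF i mk X P)%:R.
  rewrite exchange_big mulr_sumr; apply: eq_bigr => P _; rewrite !mulr_sumr.
  by apply: eq_bigr => X _; ring.
apply: ler_wpM2l; first exact: wm_ge0.
apply: (@le_trans _ _ (\sum_P pf mk P * (delta * (cov i P)%:R))); last first.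
  by apply: ler_sum => P _; apply: ler_wpM2l; [exact: pf_ge0 | exact: sumX_Dp].
rewrite (eq_bigr (fun P => delta * (pf mk P * (cov i P)%:R))); last by move=> P _; ring.
rewrite -mulr_sumr -mulrA; apply: ler_wpM2l => //.
case hc: (mk i && _); last first.
  by rewrite mulr0; apply: sumr_ge0 => P _; rewrite mulr_ge0 ?pf_ge0 ?ler0n.
case/andP: hc => h1 h2; rewrite mulr1 (_ : 2^-1 = 1 / 2); last by rewrite div1r.
exact: sum_pf_cov.
Qed.

End PerUser.

Lemma partner_uniq (m : nat) (P : {set {set 'I_m}}) (i j k : 'I_m) :
  trivIset P -> [set i; j] \in P -> [set i; k] \in P -> j != i -> k != i -> j = k.
Proof.
move=> tr hj hk ji ki.
have [e|ne] := eqVneq [set i; j] [set i; k].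
  have : k \in [set i; j] by rewrite e !inE eqxx orbT.
  by rewrite !inE (negbTE ki) => /eqP.
move/trivIsetP: tr => /(_ _ _ hj hk ne) dis.
by have := disjointFr dis (_ : i \in [set i; j]); rewrite !inE eqxx => /(_ isT).
Qed.

Section Assembly.
Variables (R : realType) (n m : nat).
Variables (p : R) (zeta : 'I_n -> R) (theta : 'I_m -> R).
Hypotheses (p0 : 0 < p) (p1 : p <= 1).

Definition Dp i (u : U m) : bool := let: (mk, X, P) := u in DpF i mk X P.

Lemma prob1_ge0 t i : 0 <= prob1 zeta theta t i.
Proof. by rewrite /prob1 divr_ge0 // ?addr_ge0 // ltW // expR_gt0. Qed.

Lemma prob1_le1 t i : prob1 zeta theta t i <= 1.
Proof.
rewrite /prob1 ler_pdivrMr ?mul1r ?addr_gt0 ?expR_gt0 //.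
by rewrite lerDr ltW // expR_gt0.
Qed.

Lemma EU_EE t (G : U m -> R) :
  \sum_u wU p zeta theta t u * G u
  = EE p (prob1 zeta theta t) (fun mk X P => G (mk, X, P)).
Proof. by rewrite sum_U. Qed.

Lemma weight_ge0 w : 0 <= weight p zeta theta w.
Proof.
rewrite weight_split; apply: prodr_ge0 => t _; case: (proj w t) => [[mk X] P] /=.
have p0' : 0 <= p by exact: ltW.
rewrite !mulr_ge0 //.
- exact: (wm_ge0 p0' p1).
- exact: (wx_ge0 (prob1_ge0 t) (prob1_le1 t)).
- exact: pf_ge0.
Qed.

Lemma total : \sum_w weight p zeta theta w = 1.
Proof.
under eq_bigr do rewrite weight_split.
rewrite sum_split big1 // => t _.
rewrite (eq_bigr (fun u => wU p zeta theta t u * 1)); last by move=> u _; rewrite mulr1.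
by rewrite EU_EE EE1.
Qed.

Lemma mgf i (lam : R) :
  \sum_w weight p zeta theta w * expR (lam * (\sum_t Dp i (proj w t))%:R)
  = \prod_t (1 + (expR lam - 1) * EE p (prob1 zeta theta t) (fun mk X P => (DpF i mk X P)%:R)).
Proof.
transitivity (\sum_w \prod_t (wU p zeta theta t (proj w t) * expR (lam * (Dp i (proj w t))%:R))).
  apply: eq_bigr => w _; rewrite weight_split natr_sum mulr_sumr expR_sum.
  by rewrite -big_split.
apply: eq_trans (sum_split (fun t u => wU p zeta theta t u * expR (lam * (Dp i u)%:R))) _.
apply: eq_bigr => t _.
rewrite (eq_bigr (fun u => wU p zeta theta t u * 1 + (expR lam - 1) * (wU p zeta theta t u * (Dp i u)%:R))); last first.
  by move=> u _; case: (Dp i u); rewrite /= ?mulr1 ?mulr0 ?expR0; ring.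
by rewrite big_split /= -mulr_sumr !EU_EE EE1.
Qed.


Lemma pairing_of_weight (w : outcome n m) t : weight p zeta theta w != 0 ->
  is_pairing (observed w.1.1 t) (w.2 t).
Proof.
case: w => [[mk X] P] /= hw; apply/negPn/negP => hnp; move/eqP: hw; apply.
rewrite /weight [X in _ * X](bigD1 t) //= (negbTE hnp) mul0r mulr0 //.
Qed.

Lemma deg_eq (w : outcome n m) i : weight p zeta theta w != 0 ->
  deg w i = (\sum_t Dp i (proj w t))%N.
Proof.
move=> hw; rewrite /deg /Lij exchange_big /=; apply: eq_bigr => t _.
have := pairing_of_weight t hw; case: w hw => [[mk X] P] hw /= /and3P [_ tr _].
case: (boolP (DpF i _ _ _)) => hD.
  case/existsP: hD => j0 /andP [/andP [j0i hj0] hX].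
  rewrite !ffunE in hX.
  rewrite (bigD1 j0) //= big1 => [|j /andP [ji jj0]].
    by rewrite hj0 hX eq_sym j0i.
  case E: ([set i; j] \in P t) => //=.
  by move: jj0; rewrite (partner_uniq tr E hj0 ji j0i) eqxx.
rewrite big1 // => j ji.
case E: ([set i; j] \in P t) => //=; case F: (X (t, i) != X (t, j)) => //=.
by exfalso; move/negP: hD; apply; apply/existsP; exists j; rewrite ji E !ffunE F.
Qed.

Definition kap := kappa2 zeta theta.

Lemma kap_ge1 : 1 <= kap.
Proof.
rewrite /kap /kappa2; apply: le_trans (expR_ge1Dx _); rewrite lerDl.
apply: (big_ind (fun x : R => 0 <= x)) => //; first by move=> x y hx hy; rewrite le_max hx.
all: move=> *; exact: normr_ge0.
Qed.

Lemma kap_bound t i : expR (zeta t) <= kap * expR (theta i) /\ expR (theta i) <= kap * expR (zeta t).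
Proof.
have hM : `|zeta t - theta i| <= \big[Num.max/0]_(ti : 'I_n * 'I_m) `|zeta ti.1 - theta ti.2|.
  exact: (le_bigmax 0 (fun ti : 'I_n * 'I_m => `|zeta ti.1 - theta ti.2|) (t, i)).
rewrite /kap /kappa2; split.
  rewrite -expRD ler_expR -lerBlDr; apply: le_trans hM; exact: ler_norm.
rewrite -expRD ler_expR -lerBlDr; apply: le_trans hM; rewrite distrC; exact: ler_norm.
Qed.

Lemma delta_alg (x y z k : R) : 0 < x -> 0 < y -> 0 < z -> 1 <= k ->
  z <= k * x -> z <= k * y -> x <= k * z -> y <= k * z ->
  1 / (2 * k) <= x / (z + x) * (1 - y / (z + y)) + (1 - x / (z + x)) * (y / (z + y)).
Proof.
move=> x0 y0 z0 k1 h1 h2 h3 h4.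
have zx : 0 < z + x by rewrite addr_gt0.
have zy : 0 < z + y by rewrite addr_gt0.
have -> : x / (z + x) * (1 - y / (z + y)) + (1 - x / (z + x)) * (y / (z + y))
   = (z * x + z * y) / ((z + x) * (z + y)).
  by field; rewrite ?gt_eqF.
rewrite ler_pdivlMr ?mulr_gt0 //.
have k0 : 0 < k by apply: lt_le_trans k1.
rewrite mul1r ler_pdivrMl ?mulr_gt0 //.
have e1 : z * z <= z * (k * x) by apply: ler_wpM2l => //; apply: ltW.
have e2 : z * y <= k * (z * y).
  by rewrite -{1}(mul1r (z * y)); apply: ler_wpM2r => //; rewrite mulr_ge0 // ltW.
have e3 : x * z <= k * (x * z).
  by rewrite -{1}(mul1r (x * z)); apply: ler_wpM2r => //; rewrite mulr_ge0 // ltW.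
have e4 : x * y <= (k * z) * y by apply: ler_wpM2r => //; apply: ltW.
nra.
Qed.

Lemma delta_bound t i j : i != j ->
  1 / (2 * kap) <= prob1 zeta theta t i * (1 - prob1 zeta theta t j)
     + (1 - prob1 zeta theta t i) * prob1 zeta theta t j.
Proof.
move=> _; have [a1 a2] := kap_bound t i; have [b1 b2] := kap_bound t j.
rewrite /prob1; apply: delta_alg => //; by rewrite ?expR_gt0 ?kap_ge1.
Qed.

End Assembly.

Lemma bern (R : realType) (p : R) k : 0 <= p -> p <= 1 -> (1 - p) ^+ k * (1 + k%:R * p) <= 1.
Proof.
move=> p0 p1; elim: k => [|k IH]; first by rewrite expr0 mul0r addr0 mulr1.
rewrite exprSr -mulrA; apply: le_trans IH; apply: ler_wpM2l.
  by apply: exprn_ge0; rewrite subr_ge0.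
rewrite -natr1; have hk : 0 <= k%:R :> R by rewrite ler0n. have h2 : 0 <= k%:R * (p * p) :> R by rewrite mulr_ge0 // mulr_ge0. nra.
Qed.

Section Tails.
Variables (R : realType) (n m : nat).
Variables (p : R) (zeta : 'I_n -> R) (theta : 'I_m -> R).
Hypotheses (p0 : 0 < p) (p1 : p <= 1).

Definition q t i := EE p (prob1 zeta theta t) (fun mk X P => (DpF i mk X P)%:R).

Lemma q_le t i : q t i <= p.
Proof.
apply: EE_Dp_le; [exact: ltW | exact: p1 | move=> k; exact: prob1_ge0 | move=> k; exact: prob1_le1].
Qed.

Lemma q_ge0 t i : 0 <= q t i.
Proof. apply: EE_Dp_ge0; [exact: ltW | exact: p1 | move=> k; exact: prob1_ge0 | move=> k; exact: prob1_le1]. Qed.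

Lemma q_ge t i : 2 <= m%:R * p -> p / (8 * kap zeta theta) <= q t i.
Proof.
move=> hm; have k1 := kap_ge1 zeta theta.
set k := kap zeta theta in k1 *.
have k0 : 0 < k by apply: lt_le_trans k1.
have D0 : 0 <= 1 / (2 * k) by rewrite divr_ge0 // mulr_ge0 // ltW.
have L := EE_Dp_lower (ltW p0) p1 (prob1_ge0 zeta theta t) (prob1_le1 zeta theta t)
   (@delta_bound _ _ _ zeta theta t i) D0.
apply: le_trans L.
have m2 : (2 <= m)%N.
  have : (1 < m%:R :> R). rewrite ltNge; apply/negP => h. have : m%:R * p <= 1 * p by apply: ler_wpM2r => //; exact: ltW. move=> H; have H2 := le_trans hm H; rewrite mul1r in H2; have H3 := le_trans H2 p1; lra.
  by rewrite ltr1n.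
have hb := bern m.-1 (ltW p0) p1.
have e : (m.-1)%:R = m%:R - 1 :> R.
  have m0 : (0 < m)%N by lia.
  by rewrite -[in RHS](prednK m0) -natr1 addrK.
rewrite e in hb.
have hq : (1 - p) ^+ m.-1 <= 1 / 2.
  have hpos : 0 <= (1 - p) ^+ m.-1 by apply: exprn_ge0; rewrite subr_ge0.
  have hm2 : (2 : R) <= m%:R * p := hm. have p1x : p <= 1 :> R := p1.
  have h1 : 0 <= (m%:R - 1) * p - 1 :> R by nra.
  have h2 := mulr_ge0 hpos h1. nra.
have -> : p / (8 * k) = 1 / (2 * k) / 2 * (p / 2).
  by field; rewrite gt_eqF.
apply: ler_wpM2l; first by rewrite !divr_ge0 // mulr_ge0 // ltW.
have : p * (1 - p) ^+ m.-1 <= p * (1 / 2) by apply: ler_wpM2l => //; exact: ltW.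
move=> ?; lra.
Qed.

Lemma tail_exp i (lam c : R) :
  (forall t, 0 <= 1 + (expR lam - 1) * q t i) ->
  (forall t, (expR lam - 1) * q t i <= c) ->
  \sum_w weight p zeta theta w * expR (lam * (\sum_t Dp i (proj w t))%:R) <= expR (n%:R * c).
Proof.
move=> h0 hc; rewrite mgf expRM_natl.
apply: (@le_trans _ _ (\prod_(t < n) expR c)); last by rewrite prodr_const card_ord.
apply: ler_prod => t _; rewrite h0 /=.
apply: le_trans (expR_ge1Dx _) _; rewrite ler_expR; exact: hc.
Qed.

Lemma ind_exp (x b lam : R) : 0 <= lam -> (b < x)%R%:R <= expR (lam * (x - b)).
Proof.
move=> l0; case: ltP => h /=; last by apply: ltW; exact: expR_gt0.
apply: le_trans (expR_ge1Dx _); rewrite lerDl mulr_ge0 // subr_ge0 ltW //.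
Qed.

Lemma high i :
  \sum_w weight p zeta theta w * (3 / 2 * (n%:R * p) < (deg w i)%:R)%R%:R
  <= expR (- (n%:R * p / 24)).
Proof.
set B := 3 / 2 * (n%:R * p).
apply: (@le_trans _ _ (\sum_w weight p zeta theta w *
   (expR (- (1/4 * B)) * expR (1/4 * (\sum_t Dp i (proj w t))%:R)))).
  apply: ler_sum => w _.
  have [->|hw] := eqVneq (weight p zeta theta w) 0; first by rewrite !mul0r.
  apply: ler_wpM2l; first exact: weight_ge0.
  rewrite -expRD (deg_eq i hw); apply: le_trans (ind_exp _ _ (_ : 0 <= 1/4)) _ => //.
    lra.
  by rewrite ler_expR mulrBr addrC.
rewrite (eq_bigr (fun w => expR (- (1/4 * B)) * (weight p zeta theta w *
    expR (1/4 * (\sum_t Dp i (proj w t))%:R)))); last by move=> w _; ring.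
rewrite -mulr_sumr.
have e14 : expR (1/4 : R) - 1 <= 1/3.
  have h := expR_ge1Dx (- (1/4 : R)).
  have hp : expR (1/4 : R) * expR (- (1/4)) = 1 by rewrite expRxMexpNx_1.
  have ? := expR_gt0 (1/4 : R); nra.
have e0 : 0 <= expR (1/4 : R) - 1.
  by have := expR_ge1Dx (1/4 : R); lra.
apply: le_trans.
  apply: ler_wpM2l; first exact: ltW (expR_gt0 _).
  apply: (tail_exp (c := p / 3)) => t.
    by rewrite addr_ge0 // mulr_ge0 // q_ge0.
  have ? := q_le t i; have ? := q_ge0 t i; nra.
rewrite -expRD ler_expR /B; lra.
Qed.

Lemma low i : 2 <= m%:R * p ->
  \sum_w weight p zeta theta w * ((deg w i)%:R < n%:R * p / (24 * kap zeta theta))%R%:R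
  <= expR (n%:R * p / (24 * kap zeta theta) - n%:R * p / (16 * kap zeta theta)).
Proof.
move=> hm; set A := n%:R * p / (24 * kap zeta theta).
apply: (@le_trans _ _ (\sum_w weight p zeta theta w *
   (expR A * expR (-1 * (\sum_t Dp i (proj w t))%:R)))).
  apply: ler_sum => w _.
  have [->|hw] := eqVneq (weight p zeta theta w) 0; first by rewrite !mul0r.
  apply: ler_wpM2l; first exact: weight_ge0.
  rewrite -expRD (deg_eq i hw).
  have h := ind_exp A ((\sum_t Dp i (proj w t))%:R) (@ler01 R).
  apply: le_trans h _.
  by rewrite ler_expR mul1r mulN1r.
rewrite (eq_bigr (fun w => expR A * (weight p zeta theta w *
    expR (-1 * (\sum_t Dp i (proj w t))%:R)))); last by move=> w _; ring.
rewrite -mulr_sumr.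
have k1 := kap_ge1 zeta theta.
have k0 : 0 < kap zeta theta by apply: lt_le_trans k1.
have em1 : expR (-1 : R) <= 1/2.
  have h := expR_ge1Dx (1 : R).
  have hp : expR (1 : R) * expR (- 1) = 1 by rewrite expRxMexpNx_1.
  have ? := expR_gt0 (-1 : R); nra.
have em0 := expR_gt0 (-1 : R).
apply: le_trans.
  apply: ler_wpM2l; first exact: ltW (expR_gt0 _).
  apply: (tail_exp (c := - (p / (16 * kap zeta theta)))).
    move=> t; have h1 := q_le t i; have h0 := q_ge0 t i.
    have h2 := mulr_ge0 (ltW em0) h0.
    have h3 : (expR (-1) - 1) * q t i = expR (-1) * q t i - q t i by ring.
    rewrite h3 addrC -addrA; apply: addr_ge0 => //; rewrite addrC subr_ge0; exact: le_trans h1 p1.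
  move=> t; have hq := q_ge t i hm; have h0 := q_ge0 t i.
  have h4 : (expR (-1) - 1) * q t i <= (- (1/2)) * q t i.
    by apply: ler_wpM2r => //; lra.
  apply: le_trans h4 _.
  have -> : p / (16 * kap zeta theta) = 1/2 * (p / (8 * kap zeta theta)).
    by field; rewrite gt_eqF.
  lra.
rewrite -expRD ler_expR /A.
have -> : n%:R * - (p / (16 * kap zeta theta)) = - (n%:R * p / (16 * kap zeta theta)).
  by rewrite mulrN mulrA.
by [].
Qed.

End Tails.

Unset Implicit Arguments.

Theorem lemma2 (R : realType) (alpha : R) (halpha : 0 < alpha) :
  exists C : R, 0 < C /\
  forall (n m : nat) (p : R) (zeta : 'I_n -> R) (theta : 'I_m -> R),
    (0 < n)%N -> 0 < p -> p <= 1 ->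
    2 <= m%:R * p ->
    m%:R <= n%:R `^ alpha ->
    C * kappa2 zeta theta ^+ 2 * ln (n%:R) <= n%:R * p ->
    1 - 2 * (n%:R ^- 10) <=
      Prob p zeta theta
        (fun w => [forall i : 'I_m,
           (n%:R * p / (24 * kappa2 zeta theta) <= (deg w i)%:R)
           && ((deg w i)%:R <= 3 / 2 * (n%:R * p))]).
Proof.
exists (48 * (alpha + 10)); split; first by lra.
move=> n m p zeta theta n0 p0 p1 hm hma hC.
set K := kappa2 zeta theta.
have K1 : 1 <= K := kap_ge1 zeta theta.
have K0 : 0 < K by apply: lt_le_trans K1.
set N := n%:R * p.
set A := N / (24 * K).
set B := 3 / 2 * N.
set G := (fun w : outcome n m => [forall i : 'I_m, (A <= (deg w i)%:R) && ((deg w i)%:R <= B)]).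
set el := expR (A - N / (16 * K)).
set eh := expR (- (N / 24)).
have hsum : \sum_(w | ~~ G w) weight p zeta theta w <= m%:R * (el + eh).
  apply: (@le_trans _ _ (\sum_w weight p zeta theta w *
     \sum_(i < m) (((deg w i)%:R < A)%R%:R + (B < (deg w i)%:R)%R%:R))).
    rewrite big_mkcond /=; apply: ler_sum => w _.
    have wg := weight_ge0 zeta theta p0 p1 w.
    case hG: (G w) => /=.
      by rewrite mulr_ge0 // sumr_ge0 // => i _; rewrite addr_ge0 // ler0n.
    rewrite -[X in X <= _]mulr1; apply: ler_wpM2l => //.
    move/negbT: hG; rewrite /G negb_forall => /existsP [i0].
    rewrite negb_and -!ltNge => hi0.
    rewrite (bigD1 i0) //= -[X in X <= _]addr0; apply: lerD.
      by case/orP: hi0 => ->; rewrite /= ?lerDl ?lerDr ?ler0n.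
    by apply: sumr_ge0 => i _; rewrite addr_ge0 // ler0n.
  rewrite (eq_bigr (fun w => \sum_(i < m) (weight p zeta theta w * ((deg w i)%:R < A)%R%:R
      + weight p zeta theta w * (B < (deg w i)%:R)%R%:R))); last first.
    by move=> w _; rewrite mulr_sumr; apply: eq_bigr => i _; rewrite mulrDr.
  rewrite exchange_big /=.
  apply: (@le_trans _ _ (\sum_(i < m) (el + eh))); last by rewrite sumr_const card_ord mulr_natl.
  apply: ler_sum => i _; rewrite big_split /=; apply: lerD.
    exact: (low zeta theta p0 p1 i hm).
  exact: (high zeta theta p0 p1 i).
have hP : Prob p zeta theta G = 1 - \sum_(w | ~~ G w) weight p zeta theta w.
  by rewrite -(total p zeta theta) (bigID G) /= addrK.
rewrite hP.
suff : m%:R * (el + eh) <= 2 * n%:R ^- 10 by lra.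
set L := ln (n%:R : R).
have nR : 0 < n%:R :> R by rewrite ltr0n.
have L0 : 0 <= L by rewrite /L ln_ge0 // ler1n.
have a10 : 0 <= (alpha + 10) * L by rewrite mulr_ge0 //; lra.
have N0 : 0 <= N by rewrite /N mulr_ge0 // ltW.
have hN : (alpha + 10) * L <= N / (48 * K).
  rewrite ler_pdivlMr ?mulr_gt0 //.
  apply: le_trans hC; rewrite /K.
  have e : (alpha + 10) * L * (48 * K) = 48 * (alpha + 10) * K * L by ring.
  rewrite e -mulrA -[X in _ <= X]mulrA; apply: ler_wpM2l; first lra.
  rewrite -/K -/L expr2 -mulrA -[X in X <= _]mul1r; apply: ler_wpM2r => //; by rewrite mulr_ge0 // ltW.
have hel : el <= expR (- ((alpha + 10) * L)).
  rewrite /el ler_expR /A.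
  have -> : N / (24 * K) - N / (16 * K) = - (N / (48 * K)) by field; rewrite gt_eqF.
  by rewrite lerN2.
have heh : eh <= expR (- ((alpha + 10) * L)).
  rewrite /eh ler_expR lerN2; apply: le_trans hN _.
  rewrite ler_pdivrMr ?mulr_gt0 //.
  have h48 : N / 24 * (48 * K) = N * (2 * K) by field.
  rewrite h48 -[X in X <= _]mulr1; apply: ler_wpM2l => //; lra.
have hmp : m%:R <= expR (alpha * L).
  by move: hma; rewrite /powR gt_eqF.
have ep : 0 < expR (- ((alpha + 10) * L)) := expR_gt0 _.
apply: (@le_trans _ _ (expR (alpha * L) * (2 * expR (- ((alpha + 10) * L))))).
  apply: ler_pM => //.
    by rewrite addr_ge0 // ltW // expR_gt0.
  lra.
rewrite mulrCA -expRD.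
have -> : alpha * L + - ((alpha + 10) * L) = - (10%:R * L) by ring.
rewrite expRN expRM_natl /L lnK //.
Qed.
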